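(* For $k\in\mathbb N_0$ and real $\alpha\ge0$ let $S^{(\alpha)}_k=\sum_{p\in\mathbb P_k}p^{-\alpha}$, where $\mathbb P_k=\{p^{(k)}_n:n\in\mathbb N\}$. The series $S^{(\alpha)}_k$ converges if and only if $\alpha>1$, or $\alpha=1$ and $k\ge2$. Moreover, for each $\alpha\ge1$, $S^{(\alpha)}_k\to0$ as $k\to+\infty$.
   Context: Let $p_n$ denote the $n$-th prime number. Define $p^{(0)}_n=n$ and recursively $p^{(k+1)}_n=p_{p^{(k)}_n}$ for $k\in\mathbb N_0$. *)

(* Defs.v *)
From mathcomp Require Import all_boot all_order all_algebra.
From mathcomp Require Import all_classical all_reals all_analysis.
Set Implicit Arguments. Unset Strict Implicit. Unset Printing Implicit Defensive.
Import Order.TTheory GRing.Theory Num.Theory.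

Lemma exists_prime_above (m : nat) : exists p, (m < p) && prime p.
Proof. by case: (prime_above m) => p Hmp Hp; exists p; rewrite Hmp Hp. Qed.

Definition next_prime (m : nat) : nat := ex_minn (exists_prime_above m).

(* nth_prime n = p_n, 1-indexed: p_1 = 2, p_2 = 3, p_3 = 5, ...
   (nth_prime 0 = 1 is an irrelevant junk value) *)
Definition nth_prime (n : nat) : nat := iter n next_prime 1.

(* iterated prime: iter_prime k n = p^{(k)}_n, with p^{(0)}_n = n and
   p^{(k+1)}_n = p_{p^{(k)}_n} *)
Definition iter_prime (k n : nat) : nat := iter k nth_prime n.

(* the n-th term (n >= 0) of S^{(alpha)}_k = sum_{m >= 1} (p^{(k)}_m)^{-alpha},
   i.e. term for m = n+1 *)
Definition S_term {R : realType} (k : nat) (alpha : R) (n : nat) : R :=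
  ((iter_prime k n.+1)%:R `^ (- alpha))%R.

(* Main.v *)
Require Import Defs.
From mathcomp Require Import all_boot all_order all_algebra.
From mathcomp Require Import all_classical all_reals all_analysis.
From mathcomp Require Import zify.
From mathcomp.algebra_tactics Require Import ring lra.
Import Order.TTheory GRing.Theory Num.Theory numFieldNormedType.Exports.

Local Open Scope nat_scope.

Definition pic (x : nat) : nat := count prime (iota 0 x.+1).

Lemma next_prime_spec m : [/\ m < next_prime m, prime (next_prime m) &
  forall q, m < q -> prime q -> next_prime m <= q].
Proof.
rewrite /next_prime; case: ex_minnP => p /andP[Hm Hp] Hmin; split => // q Hq Pq.
by apply: Hmin; rewrite Hq Pq.
Qed.

Lemma pic_split a d : pic (a + d) = pic a + count prime (iota a.+1 d).
Proof. by rewrite /pic -addSn iotaD count_cat add0n. Qed.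

Lemma pic_mono a b : a <= b -> pic a <= pic b.
Proof. by move=> ab; rewrite -(subnKC ab) pic_split leq_addr. Qed.

Lemma pic_gap a y : a <= y -> y < next_prime a -> pic y = pic a.
Proof.
move=> ay yn; rewrite -(subnKC ay) pic_split.
rewrite (@eq_in_count _ _ pred0) ?count_pred0 ?addn0 // => i.
rewrite mem_iota => /andP[ai iy] /=.
case: (next_prime_spec a) => _ _ H; apply/negP => Pi.
have := H i ai Pi; lia.
Qed.

Lemma pic_next a : pic (next_prime a) = (pic a).+1.
Proof.
case: (next_prime_spec a) => an Pn _.
have -> : next_prime a = (next_prime a).-1 + 1 by lia.
rewrite pic_split (@pic_gap a); [| lia | lia].
by rewrite /= addn0 prednK ?Pn ?addn1 //; lia.
Qed.

Lemma nth_primeS m : nth_prime m.+1 = next_prime (nth_prime m).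
Proof. by rewrite /nth_prime iterS. Qed.

Lemma pic_nth m : pic (nth_prime m) = m.
Proof. by elim: m => [//|m IH]; rewrite nth_primeS pic_next IH. Qed.

Lemma nth_prime_ltS m : nth_prime m < nth_prime m.+1.
Proof. by rewrite nth_primeS; case: (next_prime_spec (nth_prime m)). Qed.

Lemma nth_prime_prime m : 0 < m -> prime (nth_prime m).
Proof. by case: m => // m _; rewrite nth_primeS; case: (next_prime_spec (nth_prime m)). Qed.

Lemma nth_prime_mono : {homo nth_prime : m n / m < n}.
Proof. exact: (homo_ltn ltn_trans nth_prime_ltS). Qed.

Lemma nth_prime_monoW : {homo nth_prime : m n / m <= n}.
Proof. exact: (homo_leq leqnn leq_trans (fun i => ltnW (nth_prime_ltS i))). Qed.

Lemma nth_prime_ge m : m < nth_prime m.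
Proof.
elim: m => [//|m IH]; have := nth_prime_ltS m; lia.
Qed.

Lemma le_nth_prime m x : 0 < m -> m <= pic x -> nth_prime m <= x.
Proof.
case: m => // m _ Hm; rewrite leqNgt; apply/negP => Hx.
have Hx' : x < next_prime (nth_prime m) by rewrite -nth_primeS.
case: (leqP x (nth_prime m)) => H.
  by have := @pic_mono _ _ H; rewrite pic_nth; lia.
by have := @pic_gap _ _ (ltnW H) Hx'; rewrite pic_nth; lia.
Qed.

Lemma le_pic m x : nth_prime m <= x -> m <= pic x.
Proof. by move=> H; rewrite -{1}(pic_nth m); apply: pic_mono. Qed.

Local Open Scope nat_scope.

Lemma bin_ratio n : n.+1 * 'C(n.*2.+2, n.+1) = (n.*2.+1).*2 * 'C(n.*2, n).
Proof.
have h1 := mul_bin_diag n.*2.+2 n.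
have h2 := mul_bin_down n.*2.+1 n.
have e : n.*2.+1 - n = n.+1 by lia.
rewrite e /= in h2; rewrite /= in h1.
nia.
Qed.

Lemma bin_up n : 'C(n.*2, n) <= 4 ^ n.
Proof.
elim: n => [//|n IH].
have h := bin_ratio n.
have e : n.+1.*2 = n.*2.+2 by lia.
rewrite e -(@leq_pmul2l n.+1) // h expnS.
nia.
Qed.

Lemma bin_low n : 0 < n -> 4 ^ n <= n.*2 * 'C(n.*2, n).
Proof.
elim: n => [//|n IH _].
have h := bin_ratio n.
have e : n.+1.*2 = n.*2.+2 by lia.
rewrite e expnS.
case: n IH h {e} => [|n] IH h; first by [].
have := IH isT; nia.
Qed.

Lemma prime_dvd_fact p m : prime p -> p %| m`! -> p <= m.
Proof.
move=> Pp Hd; rewrite leqNgt; apply/negP => Hlt.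
have h0 : logn p m`! = 0.
  rewrite logn_fact // big_nat big1 // => k /andP[k1 _].
  apply: divn_small; apply: (leq_trans Hlt).
  by rewrite -{1}(expn1 p) leq_exp2l // prime_gt1.
have := pfactor_dvdn 1 Pp (fact_gt0 m); rewrite expn1 Hd h0 => /esym.
by [].
Qed.

Lemma prod_uniq_primes s m : 0 < m -> uniq s -> all prime s ->
  (forall p, p \in s -> p %| m) -> \prod_(p <- s) p %| m.
Proof.
elim: s m => [|q s IH] m m0 /=; first by rewrite big_nil dvd1n.
move=> /andP[qs us] /andP[Pq Ps] H; rewrite big_cons.
have qm : q %| m by apply: H; rewrite inE eqxx.
have Pp : forall p, p \in s -> prime p by move=> p ps; move/allP: Ps => /(_ p ps).
move: H m0; case/dvdnP: qm => m' -> H m0.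
rewrite [m' * q]mulnC dvdn_pmul2l ?prime_gt0 //; apply: IH => //.
  by move: m0; rewrite muln_gt0 => /andP[].
move=> p ps; have pm : p %| m' * q by apply: H; rewrite inE ps orbT.
move: pm; rewrite (Euclid_dvdM _ _ (Pp p ps)) => /orP[//|]; rewrite (dvdn_prime2 (Pp p ps) Pq) => /eqP E.
by move: qs; rewrite -E ps.
Qed.

Lemma pow_le_prod s n : all (fun p => n < p) s -> n ^ size s <= \prod_(p <- s) p.
Proof.
elim: s => [|q s IH] /=; first by rewrite big_nil.
move=> /andP[nq Hs]; rewrite big_cons expnS; apply: leq_mul; [exact: ltnW | exact: IH].
Qed.

Lemma cheb1 n : n ^ count prime (iota n.+1 n) <= 'C(n.*2, n).
Proof.
set s := [seq p <- iota n.+1 n | prime p].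
rewrite -size_filter -/s.
have Ha : all (fun p => n < p) s.
  by apply/allP => p; rewrite mem_filter mem_iota => /andP[_ /andP[]].
apply: (leq_trans (pow_le_prod s n Ha)).
apply: dvdn_leq; first by rewrite bin_gt0 -addnn leq_addr.
apply: prod_uniq_primes.
- by rewrite bin_gt0 -addnn leq_addr.
- by rewrite filter_uniq // iota_uniq.
- by apply/allP => p; rewrite mem_filter => /andP[].
move=> p; rewrite mem_filter mem_iota => /andP[Pp /andP[np p2n]].
have hf := bin_fact (leq_addr n n); rewrite addnK addnn in hf.
have : p %| (n.*2)`! by apply: dvdn_fact; rewrite prime_gt0 //=; lia.
rewrite -hf Euclid_dvdM // => /orP[//|]; rewrite Euclid_dvdM // orbb.
move/(prime_dvd_fact _ _ Pp); lia.
Qed.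

Lemma sum_pow_le p M N : 1 < p ->
  \sum_(1 <= k < N.+1) nat_of_bool (p ^ k <= M) <= minn N (trunc_log p M).
Proof.
move=> p1; elim: N => [|N IH]; first by rewrite big_geq.
rewrite big_nat_recr //=.
case: (boolP (p ^ N.+1 <= M)) => H /=.
  have := trunc_log_max p1 H; lia.
lia.
Qed.

Lemma plogC n p : prime p -> 0 < n -> p ^ logn p 'C(n.*2, n) <= n.*2.
Proof.
move=> Pp n0.
have p1 := prime_gt1 Pp.
have hf := bin_fact (leq_addr n n); rewrite addnK addnn in hf.
have C0 : 0 < 'C(n.*2, n) by rewrite bin_gt0 -addnn leq_addr.
have Hl : logn p (n.*2)`! = logn p 'C(n.*2,n) + (logn p n`! + logn p n`!).
  by rewrite -hf lognM ?muln_gt0 ?fact_gt0 // lognM ?fact_gt0.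
rewrite !logn_fact // in Hl.
have HB : \sum_(1 <= k < n.+1) n %/ p ^ k = \sum_(1 <= k < n.*2.+1) n %/ p ^ k.
  rewrite (@big_cat_nat _ _ _ n.+1 1 n.*2.+1) //=; last by lia.
  rewrite -[LHS]addn0; congr (_ + _); apply/esym.
  rewrite big_nat big1 // => k /andP[nk _].
  apply: divn_small; apply: (leq_trans nk); apply: ltnW; exact: ltn_expl.
rewrite HB in Hl.
have Ht : forall k, n.*2 %/ p ^ k <= n %/ p ^ k + n %/ p ^ k + nat_of_bool (p ^ k <= n.*2).
  move=> k; have d0 : 0 < p ^ k by rewrite expn_gt0 prime_gt0.
  case: (leqP (p ^ k) n.*2) => Hd /=.
    set d := p ^ k in d0 Hd *.
    have := ltn_divLR n (n %/ d).+1 d0; rewrite ltnSn => /esym H.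
    have H2 : n.*2 %/ d < (n %/ d + n %/ d + 1).+1.
      rewrite ltn_divLR //; set q := n %/ d in H *; nia.
    lia.
  by rewrite divn_small.
have Hs : \sum_(1 <= k < n.*2.+1) n.*2 %/ p ^ k <= \sum_(1 <= k < n.*2.+1) (n %/ p ^ k + n %/ p ^ k + nat_of_bool (p ^ k <= n.*2)).
  by apply: leq_sum => k _; exact: Ht.
rewrite !big_split /= in Hs.
have Hm := sum_pow_le p (n.*2) (n.*2) p1.
have Hlog : logn p 'C(n.*2, n) <= trunc_log p n.*2 by lia.
apply: leq_trans (trunc_logP p1 _); last by lia.
by rewrite leq_exp2l.
Qed.

Lemma prod_const_seq (s : seq nat) c : \prod_(i <- s) c = c ^ size s.
Proof. by elim: s => [|a s IH]; rewrite ?big_nil ?big_cons ?IH ?expnS. Qed.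

Lemma cheb4 n : 0 < n -> 'C(n.*2, n) <= n.*2 ^ pic n.*2.
Proof.
move=> n0.
have C0 : 0 < 'C(n.*2, n) by rewrite bin_gt0 -addnn leq_addr.
have hf := bin_fact (leq_addr n n); rewrite addnK addnn in hf.
rewrite {1}(prod_prime_decomp C0) prime_decompE big_map /=.
apply: (@leq_trans (\prod_(p <- primes 'C(n.*2, n)) n.*2)).
  rewrite big_seq [X in _ <= X]big_seq; apply: leq_prod => p.
  by rewrite mem_primes => /and3P[Pp _ _]; exact: plogC.
rewrite prod_const_seq; apply: leq_pexp2l; first by lia.
rewrite /pic -size_filter; apply: uniq_leq_size; first exact: primes_uniq.
move=> p; rewrite mem_primes mem_filter mem_iota => /and3P[Pp _ pC] /=.
rewrite Pp /=; apply/(prime_dvd_fact _ _ Pp).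
by rewrite -hf; apply: dvdn_mulr.
Qed.

Local Open Scope nat_scope.

Lemma cheb_up_block J : J * (pic (2 ^ J.+1) - pic (2 ^ J)) <= 2 ^ J.+1.
Proof.
have e : 2 ^ J.+1 = 2 ^ J + 2 ^ J by rewrite expnS mul2n addnn.
rewrite e pic_split addKn.
have h := leq_trans (cheb1 (2 ^ J)) (bin_up (2 ^ J)).
rewrite -expnM (_ : 4 = 2 ^ 2) // -expnM leq_exp2l // in h.
lia.
Qed.

Lemma cheb_up J : J * pic (2 ^ J) <= 4 * 2 ^ J.
Proof.
elim: J => [//|J IH].
case: J IH => [|[|[|J]]] IH; [by [] | by [] | by [] | ].
set K := J.+3 in IH *.
have hb := cheb_up_block K.
have hm := pic_mono (2 ^ K) (2 ^ K.+1) (@leq_pexp2l 2 _ _ isT (leqnSn K)).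
rewrite expnS in hb *.
set X := 2 ^ K in IH hb hm *.
set a := pic X in IH hb hm *.
set c := pic (2 * X) in hb hm *.
have K3 : 3 <= K by [].
rewrite -(@leq_pmul2l K) //.
nia.
Qed.

Lemma cheb_low J : 2 ^ J.+1 <= J.+1 * (pic (2 ^ J.+1)).+1.
Proof.
have n0 : 0 < 2 ^ J by rewrite expn_gt0.
have h := leq_trans (bin_low _ n0) (leq_mul (leqnn _) (cheb4 _ n0)).
have e : (2 ^ J).*2 = 2 ^ J.+1 by rewrite expnS mul2n.
rewrite e -expnS -expnM (_ : 4 = 2 ^ 2) // -expnM leq_exp2l // in h.
by apply: leq_trans h; rewrite expnS.
Qed.

Lemma pU j m : 2 ^ j <= m -> m * j.+1 <= 8 * nth_prime m.
Proof.
move=> Hm; set P := nth_prime m.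
have m0 : 0 < m by apply: leq_trans Hm; rewrite expn_gt0.
have mP : m <= P := ltnW (nth_prime_ge m).
have P0 : 0 < P by lia.
set J := (trunc_log 2 P).+1.
have h1 : P < 2 ^ J := @trunc_log_ltn 2 P isT.
have h2 : 2 ^ J <= P.*2 by rewrite /J expnS mul2n leq_double trunc_logP.
have h3 : m <= pic (2 ^ J) by rewrite -(pic_nth m); apply: pic_mono; exact: ltnW.
have h4 := cheb_up J.
have h5 : j < J by rewrite -(@ltn_exp2l 2) //; lia.
have h6 : m * J <= J * pic (2 ^ J) by rewrite mulnC leq_mul2l h3 orbT.
have h7 : m * j.+1 <= m * J by rewrite leq_mul2l h5 orbT.
lia.
Qed.

Lemma pL m : 0 < m -> nth_prime m <= 16 * m * (trunc_log 2 m).+1.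
Proof.
move=> m0.
set j := (trunc_log 2 m).+1.
have hm1 : m < 2 ^ j := @trunc_log_ltn 2 m isT.
have hm2 : 2 ^ j <= m.*2 by rewrite /j expnS mul2n leq_double trunc_logP.
set l := trunc_log 2 j.
have hj1 : 2 ^ l <= j by rewrite trunc_logP.
have hj2 : j < 2 ^ l.+1 := @trunc_log_ltn 2 j isT.
have hl : l < 2 ^ l := @ltn_expl 2 l isT.
have hJ : j + l + 3 <= 2 ^ (l + 3).
  rewrite expnD (_ : 2 ^ 3 = 8) // ; rewrite expnS in hj2; lia.
have hc := cheb_low (j + l + 2).
have e : (j + l + 2).+1 = j + l + 3 by lia.
rewrite e in hc.
have hJm : (j + l + 3) * m.+1 <= 2 ^ (j + l + 3).
  rewrite -addnA expnD mulnC; apply: leq_mul => //; by rewrite addnA.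
have Hpic : m <= pic (2 ^ (j + l + 3)).
  have := leq_trans hJm hc.
  move=> H; move: H.
  by rewrite leq_pmul2l // ltnS.
apply: leq_trans (le_nth_prime _ _ m0 Hpic) _.
rewrite -addnA expnD expnD (_ : 2 ^ 3 = 8) //.
have := leq_mul hm2 (leq_mul (leqnn 8) hj1); rewrite -/j; lia.
Qed.

Lemma leq_expr a b e : a <= b -> a ^ e <= b ^ e.
Proof. by move=> ab; elim: e => [//|e IH]; rewrite !expnS leq_mul. Qed.

Lemma iter_primeS k n : iter_prime k.+1 n = nth_prime (iter_prime k n).
Proof. by rewrite /iter_prime iterS. Qed.

Lemma iter_primeD a b n : iter_prime (a + b) n = iter_prime a (iter_prime b n).
Proof. by rewrite /iter_prime iterD. Qed.

Lemma iter_prime_mono k : {homo iter_prime k : m n / m < n}.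
Proof.
elim: k => [//|k IH] m n mn; rewrite !iter_primeS; apply: nth_prime_mono; exact: IH.
Qed.

Lemma iter_prime_monoW k : {homo iter_prime k : m n / m <= n}.
Proof.
move=> m n; rewrite leq_eqVlt => /orP[/eqP->//|mn]; exact/ltnW/iter_prime_mono.
Qed.

Lemma iter_prime_ge k n : n + k <= iter_prime k n.
Proof.
elim: k => [|k IH]; first by rewrite addn0.
rewrite iter_primeS; have := nth_prime_ge (iter_prime k n); lia.
Qed.

Lemma iter_prime_monok j k n : j <= k -> iter_prime j n <= iter_prime k n.
Proof.
move=> jk; rewrite -(subnK jk) iter_primeD.
have := iter_prime_ge (k - j) (iter_prime j n); lia.
Qed.

Lemma iter_prime_upper k : exists C, 0 < C /\
  forall J, iter_prime k (2 ^ J) <= C * 2 ^ J * J.+1 ^ k.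
Proof.
elim: k => [|k [C [C0 HC]]]; first by exists 1; split => // J; rewrite muln1 mul1n.
exists (16 * C * (C + k + 2)); split; first by rewrite !muln_gt0 C0 /= addn_gt0 orbT.
move=> J; rewrite iter_primeS.
set x := iter_prime k (2 ^ J).
have hx := HC J; rewrite -/x in hx.
have x0 : 0 < x.
  have := iter_prime_ge k (2 ^ J); have : 0 < 2 ^ J by rewrite expn_gt0.
  rewrite -/x; lia.
have hp := pL _ x0.
set l := trunc_log 2 x in hp *.
have hl1 : 2 ^ l <= x by rewrite trunc_logP.
have hC : C <= 2 ^ C := ltnW (@ltn_expl 2 C isT).
have hJ : J.+1 <= 2 ^ J := @ltn_expl 2 J isT.
have hY : J.+1 ^ k <= 2 ^ (J * k) by rewrite expnM; apply: leq_expr.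
have hl : l <= C + J + J * k.
  rewrite -(@leq_exp2l 2) // !expnD.
  apply: leq_trans hl1 _; apply: leq_trans hx _.
  by rewrite leq_mul // leq_mul.
have hl' : l.+1 <= (C + k + 2) * J.+1 by nia.
apply: leq_trans hp _.
apply: (@leq_trans (16 * (C * 2 ^ J * J.+1 ^ k) * ((C + k + 2) * J.+1))).
  by rewrite leq_mul // leq_mul.
rewrite expnS; set X := 2 ^ J; set Y := J.+1 ^ k.
nia.
Qed.

Local Open Scope ring_scope.


Section Real.
Variable R : realType.

Lemma series_bounded_cvg (u : R^nat) : (forall n, 0 <= u n) ->
  (exists M, forall N, series u N <= M) -> cvgn (series u).
Proof.
move=> u0 [M HM]; apply: nondecreasing_is_cvgn.
  by apply: nondecreasing_series => n _ _; exact: u0.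
by exists M => _ [n _ <-]; exact: HM.
Qed.

Lemma series_le_lim (u : R^nat) : (forall n, 0 <= u n) ->
  cvgn (series u) -> forall N, series u N <= limn (series u).
Proof.
move=> u0 cu N; apply: nondecreasing_cvgn_le => //.
by apply: nondecreasing_series => n _ _; exact: u0.
Qed.

Lemma series_shift (F : nat -> R) N :
  series (fun n => F n.+1) N = \sum_(1 <= m < N.+1) F m.
Proof.
rewrite /series /= (big_addn 0 N.+1 1) subn1 /=.
by apply: eq_bigr => i _; rewrite addn1.
Qed.

Lemma sum_blocks (F : nat -> R) J :
  \sum_(1 <= m < 2 ^ J) F m = \sum_(0 <= j < J) \sum_(2 ^ j <= m < 2 ^ j.+1) F m.
Proof.
elim: J => [|J IH]; first by rewrite !big_geq.
rewrite big_nat_recr //= -IH (@big_cat_nat _ _ _ (2 ^ J)) //.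
- by rewrite expn_gt0.
- by rewrite leq_pexp2l.
Qed.

Lemma block_le (F : nat -> R) (d : R) j :
  (forall m, (2 ^ j <= m < 2 ^ j.+1)%N -> F m <= d / (2 ^ j)%:R) ->
  \sum_(2 ^ j <= m < 2 ^ j.+1) F m <= d.
Proof.
move=> H; apply: (le_trans (ler_sum_nat H)); rewrite sumr_const_nat.
have -> : (2 ^ j.+1 - 2 ^ j = 2 ^ j)%N by rewrite expnS; lia.
by rewrite -(mulr_natr (d / _)) divfK // pnatr_eq0 -lt0n expn_gt0.
Qed.

Lemma block_ge (F : nat -> R) (d : R) j :
  (forall m, (2 ^ j <= m < 2 ^ j.+1)%N -> d / (2 ^ j)%:R <= F m) ->
  d <= \sum_(2 ^ j <= m < 2 ^ j.+1) F m.
Proof.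
move=> H; apply: (le_trans _ (ler_sum_nat H)); rewrite sumr_const_nat.
have -> : (2 ^ j.+1 - 2 ^ j = 2 ^ j)%N by rewrite expnS; lia.
by rewrite -(mulr_natr (d / _)) divfK // pnatr_eq0 -lt0n expn_gt0.
Qed.

Lemma sum_ext (F : nat -> R) M a b : (forall m, 0 <= F m) -> (a <= b)%N ->
  \sum_(M <= m < a) F m <= \sum_(M <= m < b) F m.
Proof.
move=> F0 ab; case: (leqP M a) => Ma.
  rewrite (@big_cat_nat _ _ _ a M b) //= lerDl; exact: sumr_ge0.
by rewrite big_geq ?sumr_ge0 // ltnW.
Qed.

Lemma geom_le (r : R) J : 0 <= r < 1 -> \sum_(0 <= j < J) r ^+ j <= (1 - r)^-1.
Proof.
move=> /andP[r0 r1].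
have E : \sum_(0 <= j < J) r ^+ j * (1 - r) = 1 - r ^+ J.
  elim: J => [|J IH]; first by rewrite big_geq // expr0 subrr.
  by rewrite big_nat_recr //= IH exprS; ring.
rewrite -[(1 - r)^-1]mul1r ler_pdivlMr ?subr_gt0 // mulr_suml E.
by rewrite lerBlDr lerDl exprn_ge0.
Qed.

Lemma sum_telesc J :
  \sum_(0 <= j < J) ((j.+1 * j.+2)%N%:R^-1 : R) = 1 - (J.+1%:R)^-1.
Proof.
elim: J => [|J IH]; first by rewrite big_geq // invr1 subrr.
rewrite big_nat_recr //= IH natrM.
have h1 : (J.+1%:R : R) != 0 by rewrite pnatr_eq0.
have h2 : (J.+2%:R : R) != 0 by rewrite pnatr_eq0.
rewrite -[J.+2%:R]natr1 -[J.+1%:R]natr1 in h1 h2 *.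
field.
by rewrite h1 h2.
Qed.

Lemma bernoulli (h : R) n : 0 <= h -> 1 + n%:R * h <= (1 + h) ^+ n.
Proof.
move=> h0; elim: n => [|n IH]; first by rewrite mul0r addr0 expr0.
rewrite exprS -natr1.
have H1 : 0 <= 1 + h by lra.
apply: le_trans (ler_wpM2l H1 IH).
have : 0 <= n%:R * h * h by rewrite !mulr_ge0.
nra.
Qed.

End Real.

Local Open Scope ring_scope.

Section Real2.
Variable R : realType.

Lemma S_term_ge0 k (a : R) n : 0 <= S_term k a n.
Proof. exact: powR_ge0. Qed.

Lemma series_S k (a : R) N :
  series (S_term k a) N = \sum_(1 <= m < N.+1) ((iter_prime k m)%:R `^ (- a)).
Proof. exact: (@series_shift R (fun m => (iter_prime k m)%:R `^ (- a))). Qed.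

Lemma powN_anti (x y a : R) : 1 <= x -> x <= y -> 0 <= a -> y `^ (- a) <= x `^ (- a).
Proof.
move=> x1 xy a0.
have x0 : 0 < x by lra.
have y0 : 0 < y by lra.
rewrite !powRN lef_pV2 ?posrE ?powR_gt0 //.
apply: ge0_ler_powR => //; rewrite nnegrE; lra.
Qed.

Lemma invle (x c K b : R) : 0 < x -> 0 < b -> 0 < K -> b * K <= c * x ->
  x^-1 <= c / K / b.
Proof.
move=> x0 b0 K0 H.
rewrite ler_pdivlMr // ler_pdivlMr // -mulrA mulrC ler_pdivrMr //.
Qed.

Lemma invge (x c K b : R) : 0 < x -> 0 < b -> 0 < K -> c * x <= b * K ->
  c / K / b <= x^-1.
Proof.
move=> x0 b0 K0 H.
rewrite ler_pdivrMr // ler_pdivrMr // -mulrA mulrC ler_pdivlMr //.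
Qed.

Lemma nat_gt0 (n : nat) : (0 < n)%N -> 0 < (n%:R : R).
Proof. by rewrite ltr0n. Qed.

Lemma pow2j_powR (a : R) j : ((2 ^ j)%N%:R : R) `^ a = (2 `^ a) ^+ j.
Proof.
rewrite natrX -powR_mulrn // -powRrM mulrC powRrM powR_mulrn //.
Qed.

Lemma cvg_gt1 k (a : R) : 1 < a -> cvgn (series (S_term k a)).
Proof.
move=> a1.
set s := (2 : R) `^ (- a); set r := 2 * s.
have s0 : 0 <= s by exact: powR_ge0.
have r0 : 0 <= r by rewrite /r mulr_ge0.
have r1 : r < 1.
  have l2 : 0 < ln (2 : R) by apply: ln_gt0; lra.
  have h2 : 2 < (2 : R) `^ a.
    have : ln (2 : R) < ln (2 `^ a) by rewrite ln_powR; nra.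
    by rewrite ltr_ln // posrE ?powR_gt0 //; lra.
  rewrite /r /s powRN -[2 * _]/(2 / _) ltr_pdivrMr ?mul1r //.
apply: series_bounded_cvg; first exact: S_term_ge0.
exists ((1 - r)^-1) => N; rewrite series_S.
pose G m := ((m%:R : R) `^ (- a)).
have G0 : forall m, 0 <= G m by move=> m; exact: powR_ge0.
apply: (@le_trans _ _ (\sum_(1 <= m < N.+1) G m)).
  apply: ler_sum_nat => m /andP[m1 _]; apply: powN_anti; last by lra.
  - by rewrite ler1n.
  - by rewrite ler_nat; have := iter_prime_ge k m; lia.
apply: (@le_trans _ _ (\sum_(1 <= m < 2 ^ N) G m)).
  by apply: sum_ext => //; exact: ltn_expl.
rewrite sum_blocks.
apply: (@le_trans _ _ (\sum_(0 <= j < N) r ^+ j)); last first.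
  by apply: geom_le; rewrite r0 r1.
apply: ler_sum_nat => j _; apply: block_le => m /andP[jm _].
apply: (@le_trans _ _ (((2 ^ j)%N%:R : R) `^ (- a))).
  apply: powN_anti; last by lra.
  - by rewrite ler1n expn_gt0.
  - by rewrite ler_nat.
rewrite pow2j_powR /r exprMn natrX mulrC mulKf //.
Qed.

End Real2.

Local Open Scope ring_scope.

Section Real3.
Variable R : realType.

Lemma pp_bound j m : (2 ^ j <= m)%N ->
  (2 ^ j * (j.+1 * j.+2) <= 128 * iter_prime 2 m)%N.
Proof.
move=> jm.
have h1 := pU j m jm.
have h2 : (2 ^ j <= nth_prime m)%N by apply: leq_trans jm (ltnW (nth_prime_ge m)).
have h3 := pU j (nth_prime m) h2.
rewrite /iter_prime /=.
nia.
Qed.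

Lemma cvg_w : cvgn (series (S_term 2 (1 : R))).
Proof.
apply: series_bounded_cvg; first exact: S_term_ge0.
exists 128 => N; rewrite series_S.
pose G m := ((iter_prime 2 m)%:R : R) `^ (- 1).
have G0 : forall m, 0 <= G m by move=> m; exact: powR_ge0.
apply: (@le_trans _ _ (\sum_(1 <= m < 2 ^ N) G m)).
  by apply: sum_ext => //; exact: ltn_expl.
rewrite sum_blocks.
apply: (@le_trans _ _ (\sum_(0 <= j < N) (128 / ((j.+1 * j.+2)%N%:R)))).
  apply: ler_sum_nat => j _; apply: block_le => m /andP[jm _].
  rewrite /G powR_inv1 ?ler0n //.
  have P0 : (0 < iter_prime 2 m)%N.
    have := iter_prime_ge 2 m; have : (0 < m)%N by apply: leq_trans jm; rewrite expn_gt0.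
    lia.
  apply: invle; rewrite ?ltr0n ?expn_gt0 ?muln_gt0 //.
  rewrite -natrM -(natrM _ 128) ler_nat.
  exact: pp_bound.
rewrite -mulr_sumr sum_telesc.
have : 0 <= (N.+1%:R : R)^-1 by rewrite invr_ge0 ler0n.
move=> h; rewrite mulrBr mulr1 lerBlDr lerDl; exact: mulr_ge0.
Qed.

Lemma inj_sum (w : R^nat) (g : nat -> nat) M N : (forall m, 0 <= w m) ->
  {homo g : m n / (m < n)%N} -> (M <= g 0)%N ->
  \sum_(0 <= n < N) w (g n) <= \sum_(M <= m < g N) w m.
Proof.
move=> w0 gi Mg.
elim: N => [|N IH]; first by rewrite big_geq // sumr_ge0.
rewrite big_nat_recr //=.
have MgN : (M <= g N)%N.
  case: N {IH} => // N; apply: leq_trans Mg _; apply: ltnW; exact: gi.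
apply: (@le_trans _ _ (\sum_(M <= m < (g N).+1) w m)).
  by rewrite big_nat_recr //= lerD2r.
apply: sum_ext => //; exact: gi.
Qed.

Lemma tail_le (w : R^nat) M X : (forall m, 0 <= w m) -> cvgn (series w) ->
  \sum_(M <= m < X) w m <= limn (series w) - series w M.
Proof.
move=> w0 cw.
have hM := @series_le_lim R w w0 cw M.
set T := limn (series w) in hM *.
set sM := series w M in hM *.
case: (leqP M X) => MX.
  have hX := @series_le_lim R w w0 cw X.
  rewrite -/T in hX.
  have E : series w X = sM + \sum_(M <= m < X) w m.
    by rewrite /sM /series /= (@big_cat_nat _ _ _ M 0 X).
  rewrite E in hX.
  by rewrite -(lerD2l sM) addrCA subrr addr0.
rewrite big_geq; [by rewrite subr_ge0 | exact: ltnW].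
Qed.

Definition Tw := limn (series (S_term 2 (1 : R))).

Lemma tail_bound k (a : R) N : (2 <= k)%N -> 1 <= a ->
  series (S_term k a) N <= Tw - series (S_term 2 1) (k - 2)%N.
Proof.
move=> k2 a1.
set w := S_term 2 (1 : R).
have w0 : forall m, 0 <= w m by move=> m; exact: S_term_ge0.
pose g n := (iter_prime (k - 2) n.+1).-1.
have gS : forall n, (g n).+1 = iter_prime (k - 2) n.+1.
  by move=> n; rewrite /g prednK //; have := iter_prime_ge (k - 2) n.+1; lia.
have gi : {homo g : m n / (m < n)%N}.
  move=> m n mn; rewrite -ltnS !gS; apply: iter_prime_mono.
  by rewrite ltnS.
have Mg : (k - 2 <= g 0)%N by rewrite -ltnS gS; have := iter_prime_ge (k - 2) 1; lia.
apply: (@le_trans _ _ (\sum_(0 <= n < N) w (g n))).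
  apply: ler_sum_nat => n _.
  rewrite /w /S_term gS -iter_primeD subnKC //.
  apply: ler_powR; last by lra.
  by rewrite ler1n; have := iter_prime_ge k n.+1; lia.
apply: le_trans (inj_sum w g (k - 2) N w0 gi Mg) _.
exact: (tail_le w (k - 2) (g N) w0 cvg_w).
Qed.

Lemma cvg_ge2 k (a : R) : (2 <= k)%N -> 1 <= a -> cvgn (series (S_term k a)).
Proof.
move=> k2 a1; apply: series_bounded_cvg; first exact: S_term_ge0.
by eexists => N; exact: (tail_bound k a N k2 a1).
Qed.

Lemma lim_bound k (a : R) : (2 <= k)%N -> 1 <= a ->
  0 <= limn (series (S_term k a)) <= Tw - series (S_term 2 1) (k - 2)%N.
Proof.
move=> k2 a1; have c := cvg_ge2 k a k2 a1.
apply/andP; split.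
  apply: limr_ge => //; apply: nearW => N; apply: sumr_ge0 => i _; exact: S_term_ge0.
apply: limr_le => //; apply: nearW => N; exact: (tail_bound k a N k2 a1).
Qed.

End Real3.

Local Open Scope ring_scope.

Section Real4.
Variable R : realType.

Lemma poly_exp (q D : R) k : 1 < q -> exists J : nat, D * (J.+1%:R) ^+ k < q ^+ J.
Proof.
move=> q1.
set rho := q `^ (k.+1%:R)^-1.
have rho0 : 0 <= rho by exact: powR_ge0.
have rhok : rho ^+ k.+1 = q.
  rewrite -powR_mulrn // -powRrM mulVf ?pnatr_eq0 // powRr1 //; lra.
have rho1 : 1 < rho.
  rewrite ltNge; apply/negP => H; have := exprn_ile1 k.+1 rho0 H; rewrite rhok; lra.
set h := rho - 1.
have h0 : 0 < h by rewrite /h subr_gt0.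
set B := `|D| * 2%:R ^+ k / h ^+ k.+1.
have B0 : 0 <= B by rewrite /B !mulr_ge0 ?invr_ge0 ?exprn_ge0 // ltW.
have [J [JB J1']] : exists J : nat, B < J%:R /\ (1 <= J)%N.
  exists (Num.Def.archi_bound B).+1; split => //.
  apply: lt_le_trans (archi_boundP B0) _; rewrite ler_nat; exact: leqnSn.
exists J.
have J1 : 1 <= (J%:R : R) by rewrite ler1n.
have hk0 : 0 < h ^+ k.+1 by exact: exprn_gt0.
have E1 : q ^+ J = (rho ^+ J) ^+ k.+1 by rewrite -rhok -!exprM mulnC.
have E2 : (J%:R : R) * h <= rho ^+ J.
  have Hr : 1 + h = rho by rewrite /h addrCA subrr addr0.
  have := @bernoulli R h J (ltW h0); rewrite Hr; lra.
have E3 : ((J%:R : R) * h) ^+ k.+1 <= q ^+ J.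
  rewrite E1; apply: lerXn2r => //; rewrite nnegrE.
    by rewrite mulr_ge0 // ?ler0n // ltW.
  exact: exprn_ge0.
have E4 : `|D| * 2%:R ^+ k < J%:R * h ^+ k.+1.
  by move: JB; rewrite /B ltr_pdivrMr.
have E5 : (J%:R : R) ^+ k * (`|D| * 2%:R ^+ k) < J%:R ^+ k * (J%:R * h ^+ k.+1).
  rewrite ltr_pM2l //; apply: exprn_gt0; lra.
have E6 : ((J%:R : R) * h) ^+ k.+1 = J%:R ^+ k * (J%:R * h ^+ k.+1).
  by rewrite exprMn exprS mulrA [_ ^+ k * _]mulrC.
have E7 : (J.+1%:R : R) ^+ k <= (J%:R * 2%:R) ^+ k.
  apply: lerXn2r; rewrite ?nnegrE ?ler0n ?mulr_ge0 //.
  rewrite -natrM ler_nat; lia.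
have E8 : D * (J.+1%:R) ^+ k <= `|D| * (J%:R * 2%:R) ^+ k.
  apply: le_trans (_ : `|D| * (J.+1%:R) ^+ k <= _).
    by apply: ler_wpM2r; [exact: exprn_ge0 | exact: ler_norm].
  by apply: ler_wpM2l.
apply: le_lt_trans E8 _.
rewrite exprMn mulrCA.
apply: lt_le_trans E5 _.
by rewrite -E6.
Qed.

End Real4.

Local Open Scope ring_scope.

Section Real5.
Variable R : realType.

Lemma dvg_k1 : ~ cvgn (series (S_term 1 (1 : R))).
Proof.
move=> c.
have [C [C0 HC]] := iter_prime_upper 1.
set T := limn (series (S_term 1 (1 : R))).
have hT : forall N, series (S_term 1 (1 : R)) N <= T.
  exact: (@series_le_lim R _ (@S_term_ge0 R 1 1) c).
pose d (j : nat) : R := ((2 * C * j.+2)%N%:R)^-1.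
have key : forall J, \sum_(0 <= j < J) d j <= T.
  move=> J; have := hT (2 ^ J).-1; rewrite series_S prednK ?expn_gt0 //.
  rewrite sum_blocks; apply: le_trans; apply: ler_sum_nat => j _.
  apply: block_ge => m /andP[jm mj].
  have P0 : (0 < iter_prime 1 m)%N.
    have := iter_prime_ge 1 m; lia.
  rewrite powR_inv1 ?ler0n // /d -[X in X / _ <= _]mul1r.
  apply: invge; rewrite ?ltr0n ?expn_gt0 ?muln_gt0 ?C0 //.
  rewrite mul1r -natrM ler_nat.
  have h1 : (iter_prime 1 m <= iter_prime 1 (2 ^ j.+1))%N.
    exact/iter_prime_monoW/ltnW.
  have h2 := HC j.+1.
  rewrite expnS expn1 in h1 h2; nia.
have hH : forall J, series (@harmonic R) J.+1 <= 1 + (2 * C)%N%:R * T.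
  move=> J; rewrite /series /= big_nat_recl //= invr1 lerD2l.
  have E : forall j, (harmonic j.+1 : R) = (2 * C)%N%:R * d j.
    move=> j; rewrite /d /= (natrM _ (2 * C) j.+2) invfM mulrA divff ?mul1r //.
    by rewrite pnatr_eq0 muln_eq0 negb_or /= -lt0n C0.
  rewrite (eq_bigr _ (fun j _ => E j)) -mulr_sumr.
  by rewrite ler_wpM2l ?ler0n // key.
apply: (@dvg_harmonic R); apply: series_bounded_cvg.
  by move=> n; exact: harmonic_ge0.
exists (1 + (2 * C)%N%:R * T) => N.
apply: le_trans (hH N).
rewrite [leRHS]/series /= big_nat_recr //= lerDl; exact: harmonic_ge0.
Qed.

Lemma dvg_k0 : ~ cvgn (series (S_term 0 (1 : R))).
Proof.
have -> : S_term 0 (1 : R) = riemannR 1.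
  by apply/funext => n; rewrite /S_term /riemannR powRN.
by apply: dvg_riemannR; rewrite ler01 lexx.
Qed.

End Real5.

Local Open Scope ring_scope.

Section Real6.
Variable R : realType.

Lemma dvg_lt1 k (a : R) : 0 <= a -> a < 1 -> ~ cvgn (series (S_term k a)).
Proof.
move=> a0 a1 c.
have [C [C0 HC]] := iter_prime_upper k.
set T := limn (series (S_term k a)).
have hT : forall N, series (S_term k a) N <= T.
  exact: (@series_le_lim R _ (@S_term_ge0 R k a) c).
have T0 : 0 <= T by have := hT 0%N; rewrite /series /= big_geq.
set A := (2 : R) `^ a.
have A0 : 0 < A by apply: powR_gt0; lra.
have A2 : A < 2.
  have l2 : 0 < ln (2 : R) by apply: ln_gt0; lra.
  have : ln A < ln (2 : R) by rewrite /A ln_powR; nra.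
  by rewrite ltr_ln // posrE; lra.
set q := 2 / A.
have q1 : 1 < q by rewrite /q ltr_pdivlMr // mul1r.
have key : forall J : nat, q ^+ J <= T * C%:R * (J.+1%:R) ^+ k.
  move=> J.
  set N := (2 ^ J)%N; set x := iter_prime k N; set y := (C * 2 ^ J * J.+1 ^ k)%N.
  have N0 : (0 < N)%N by rewrite expn_gt0.
  have x1 : (1 <= x)%N by have := iter_prime_ge k N; lia.
  have xy : (x <= y)%N := HC J.
  have S1 : N%:R * (x%:R `^ (- a)) <= T.
    apply: le_trans (hT N); rewrite /series /=.
    have : \sum_(0 <= n < N) (x%:R : R) `^ (- a) <= \sum_(0 <= n < N) S_term k a n.
      apply: ler_sum_nat => n /andP[_ nN]; rewrite /S_term; apply: powN_anti => //.
      - by rewrite ler1n; have := iter_prime_ge k n.+1; lia.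
      - by rewrite ler_nat; apply: iter_prime_monoW.
    move=> H; apply: le_trans H; by rewrite sumr_const_nat subn0 mulr_natl.
  have S2 : (y%:R : R) `^ (- a) <= x%:R `^ (- a).
    by apply: powN_anti => //; rewrite ?ler1n ?ler_nat.
  have S3 : (y%:R : R) `^ a <= C%:R * A ^+ J * (J.+1%:R) ^+ k.
    rewrite /y (natrM _ (C * 2 ^ J)) (natrM _ C) !powRM ?ler0n ?mulr_ge0 //.
    rewrite pow2j_powR -/A natrX.
    have c1 : C%:R `^ a <= (C%:R : R) by apply: ler1_powR; rewrite ?ler1n // ltW.
    have c2 : (J.+1%:R ^+ k) `^ a <= (J.+1%:R : R) ^+ k.
      by apply: ler1_powR; [apply: exprn_ege1; rewrite ler1n | exact: ltW].
    have c3 : 0 <= A ^+ J by apply: exprn_ge0; exact: ltW.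
    apply: ler_pM; rewrite ?mulr_ge0 ?powR_ge0 //.
    by apply: ler_pM; rewrite ?powR_ge0.
  have yP : 0 < (y%:R : R) `^ a by apply: powR_gt0; rewrite ltr0n; lia.
  have S4 : (N%:R : R) <= T * (y%:R `^ a).
    rewrite -ler_pdivrMr //.
    by apply: le_trans S1; rewrite ler_pM2l ?ltr0n // -powRN.
  have S5 : (N%:R : R) <= T * (C%:R * A ^+ J * (J.+1%:R) ^+ k).
    by apply: le_trans S4 _; apply: ler_wpM2l.
  rewrite /q expr_div_n ler_pdivrMr ?exprn_gt0 //.
  move: S5; rewrite /N natrX; lra.
have [J HJ] := @poly_exp R q (T * C%:R) k q1.
by have := key J; rewrite leNgt HJ.
Qed.

End Real6.

Local Open Scope ring_scope.
Local Open Scope classical_set_scope.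

Theorem theorem3 (R : realType) :
  (forall (k : nat) (alpha : R), 0 <= alpha ->
     (cvgn (series (S_term k alpha)) <->
      (1 < alpha \/ (alpha = 1 /\ (2 <= k)%N)))) /\
  (forall alpha : R, 1 <= alpha ->
     (fun k : nat => limn (series (S_term k alpha))) @ \oo --> (0 : R)).
Proof.
split.
- move=> k a a0; split.
  + move=> c; case: (ltrgtP a 1) => [a1|a1|a1].
    * by exfalso; exact: (@dvg_lt1 R k a a0 a1 c).
    * by left.
    * right; split => //; subst a.
      case: k c => [|[|k]] c //.
      - by exfalso; exact: (@dvg_k0 R c).
      - by exfalso; exact: (@dvg_k1 R c).
  + case => [a1 | [-> k2]].
    * exact: (@cvg_gt1 R k a a1).
    * exact: (@cvg_ge2 R k 1 k2 (lexx 1)).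
- move=> a a1.
  rewrite -(cvg_shiftn 2).
  apply: (@squeeze_cvgr _ _ _ _ (fun=> 0) (fun n => Tw R - series (S_term 2 (1 : R)) n)).
  + apply: nearW => n /=.
    have := @lim_bound R (n + 2) a (leq_addl n 2) a1.
    by rewrite addnK.
  + exact: cvg_cst.
  + rewrite -[X in _ --> X](subrr (Tw R)).
    apply: cvgB; first exact: cvg_cst.
    exact: cvg_w.
Qed.
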